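(* For $n\ge1$ let $M_n$ be the smallest positive integer lying in the ideal $(1-\omega^n)\mathbb{Z}[\lambda]$. Then $M_n$ is even for every $n\ge1$, $M_n$ is divisible by $14$ whenever $n$ is even, and $M_n$ divides the norm $N(1-\omega^n)$. Moreover every periodic point $x$ of least period dividing $n$ of the scaling map $\gamma$ satisfies $x\in\frac{1}{M_n}\mathbb{Z}[\lambda]$.
   Context: Let $\lambda$ be the real root of $x^3+x^2+x-1$, $\omega=\lambda^3=1-\lambda-\lambda^2$; $\mathbb{Z}[\lambda]$ is the ring of integers of $\mathbb{Q}(\lambda)$ and $N$ is the field norm. Scaling map: put $N=7$ and the data (for $j=0,\dots,6$): $\tau_0=\lambda+\lambda^2$, $\tau_1=-1+3\lambda$, $\tau_2=\lambda-\lambda^2$, $\tau_3=-1+2\lambda+\lambda^2$, $\tau_4=1-\lambda-\lambda^2$, $\tau_5=\lambda-\lambda^2$, $\tau_6=-\lambda$; $(\nu_0,\dots,\nu_6)=(4,13,12,8,8,12,4)$; path function $p(j,t)$, $0\le t<\nu_j$, is the $(t+1)$-th entry of the list: $j=0$: $(0,6,3,6)$; $j=1$: $(0,6,3,6,1,6,2,5,6,1,6,3,6)$; $j=2$: $(0,6,3,6,1,6,2,5,6,2,4,6)$; $j=3$: $(0,6,3,6,1,6,3,6)$; $j=4$: $(0,6,4,5,6,2,4,6)$; $j=5$: $(0,6,4,5,6,2,5,6,1,6,3,6)$; $j=6$: $(0,6,4,6)$. Let $\mathcal{V}$ be the set of sequences $\sigma=((j_1,t_1),(j_2,t_2),\dots)$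 with $0\le j_k\le 6$, $0\le t_k<\nu_{j_k}$, $j_k=p(j_{k+1},t_{k+1})$ for all $k\ge1$, and which do not end in any of the tails $(1,9)^\infty,(2,6)^\infty,(3,2)^\infty,(4,6)^\infty,(5,3)^\infty,(6,1)^\infty$. Put $d_i=\sum_{t=0}^{t_i-1}\tau_{p(j_i,t)}$ and $x(\sigma)=\sum_{i\ge1}d_i\omega^{i-1}$; the map $\sigma\mapsto x(\sigma)$ is a bijection $\mathcal{V}\to[0,1)$. The scaling map $\gamma:[0,1)\to[0,1)$ is $\gamma(x)=(x-d_1)\omega^{-1}$, where $d_1$ is the first digit of the code of $x$. A point $x$ with $\gamma^n(x)=x$ has code $((j_1,t_1),\dots,(j_n,t_n))^\infty$ and equals $\frac{1}{1-\omega^n}\sum_{i=1}^n d_i\omega^{i-1}$. *)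

(* Defs.v *)
From Stdlib Require Import Reals Lra ZArith List ClassicalEpsilon.
From Coquelicot Require Import Coquelicot.
Import ListNotations.
Open Scope R_scope.

(** lambda: the real root of x^3 + x^2 + x - 1 (unique, since the cubic
    is strictly increasing). *)
Definition lam : R :=
  epsilon (inhabits 0%R) (fun x => x ^ 3 + x ^ 2 + x - 1 = 0).

Definition omega : R := lam ^ 3.

(** Elements of Z[lambda] are written a + b*lambda + c*lambda^2 with
    (a,b,c) in Z^3 ({1, lambda, lambda^2} is a Z-basis). *)
Definition Zl : Type := (Z * Z * Z)%type.

Definition evalZl (u : Zl) : R :=
  let '(a, b, c) := u in IZR a + IZR b * lam + IZR c * lam ^ 2.

(** Multiplication in Z[lambda], using lambda^3 = 1 - lambda - lambda^2
    and lambda^4 = -1 + 2 lambda. *)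
Definition Zl_mul (u v : Zl) : Zl :=
  let '(a0, a1, a2) := u in
  let '(b0, b1, b2) := v in
  let c0 := (a0 * b0)%Z in
  let c1 := (a0 * b1 + a1 * b0)%Z in
  let c2 := (a0 * b2 + a1 * b1 + a2 * b0)%Z in
  let c3 := (a1 * b2 + a2 * b1)%Z in
  let c4 := (a2 * b2)%Z in
  ((c0 + c3 - c4)%Z, (c1 - c3 + 2 * c4)%Z, (c2 - c3)%Z).

Definition Zl_one : Zl := (1%Z, 0%Z, 0%Z).
Definition Zl_lam : Zl := (0%Z, 1%Z, 0%Z).
Definition Zl_sub (u v : Zl) : Zl :=
  let '(a0, a1, a2) := u in let '(b0, b1, b2) := v in
  ((a0 - b0)%Z, (a1 - b1)%Z, (a2 - b2)%Z).

(** omega = 1 - lambda - lambda^2 as an element of Z[lambda] *)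
Definition Zl_omega : Zl := (1%Z, (-1)%Z, (-1)%Z).

Fixpoint Zl_pow (u : Zl) (n : nat) : Zl :=
  match n with O => Zl_one | S k => Zl_mul u (Zl_pow u k) end.

(** Field norm N_{Q(lambda)/Q}(u) = determinant of multiplication by u
    in the basis (1, lambda, lambda^2). *)
Definition det3 (c1 c2 c3 : Zl) : Z :=
  let '(a11, a21, a31) := c1 in
  let '(a12, a22, a32) := c2 in
  let '(a13, a23, a33) := c3 in
  (a11 * (a22 * a33 - a23 * a32)
   - a12 * (a21 * a33 - a23 * a31)
   + a13 * (a21 * a32 - a22 * a31))%Z.

Definition normZl (u : Zl) : Z :=
  det3 (Zl_mul u Zl_one) (Zl_mul u Zl_lam) (Zl_mul u (Zl_mul Zl_lam Zl_lam)).

Definition in_ideal (n : nat) (m : Z) : Prop :=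
  exists y : Zl, IZR m = (1 - omega ^ n) * evalZl y.

Definition is_Mn (n : nat) (M : Z) : Prop :=
  (0 < M)%Z /\ in_ideal n M /\
  forall m : Z, (0 < m)%Z -> in_ideal n m -> (M <= m)%Z.

Definition tau (j : nat) : Zl :=
  match j with
  | 0 => (0%Z, 1%Z, 1%Z)
  | 1 => ((-1)%Z, 3%Z, 0%Z)
  | 2 => (0%Z, 1%Z, (-1)%Z)
  | 3 => ((-1)%Z, 2%Z, 1%Z)
  | 4 => (1%Z, (-1)%Z, (-1)%Z)
  | 5 => (0%Z, 1%Z, (-1)%Z)
  | _ => (0%Z, (-1)%Z, 0%Z)
  end.

Definition nu (j : nat) : nat :=
  match j with
  | 0 => 4 | 1 => 13 | 2 => 12 | 3 => 8 | 4 => 8 | 5 => 12 | _ => 4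
  end.

Definition plist (j : nat) : list nat :=
  match j with
  | 0 => [0;6;3;6]%nat
  | 1 => [0;6;3;6;1;6;2;5;6;1;6;3;6]%nat
  | 2 => [0;6;3;6;1;6;2;5;6;2;4;6]%nat
  | 3 => [0;6;3;6;1;6;3;6]%nat
  | 4 => [0;6;4;5;6;2;4;6]%nat
  | 5 => [0;6;4;5;6;2;5;6;1;6;3;6]%nat
  | _ => [0;6;4;6]%nat
  end%nat.

(** path function p(j,t), 0 <= t < nu j : the (t+1)-th entry of plist j *)
Definition p (j t : nat) : nat := nth t (plist j) 0%nat.

(** A sequence sigma = ((j_1,t_1),(j_2,t_2),...) is encoded as
    sigma : nat -> nat * nat with sigma k = (j_{k+1}, t_{k+1}). *)
Definition forbidden_tails : list (nat * nat) :=
  [(1,9);(2,6);(3,2);(4,6);(5,3);(6,1)]%nat.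

Definition inV (sigma : nat -> nat * nat) : Prop :=
  (forall k, (fst (sigma k) <= 6)%nat /\ (snd (sigma k) < nu (fst (sigma k)))%nat) /\
  (forall k, fst (sigma k) = p (fst (sigma (S k))) (snd (sigma (S k)))) /\
  (forall jt, In jt forbidden_tails ->
     ~ exists K, forall k, (K <= k)%nat -> sigma k = jt).

Fixpoint digit_aux (j : nat) (t : nat) : R :=
  match t with
  | O => 0
  | S t' => digit_aux j t' + evalZl (tau (p j t'))
  end.

Definition digit (jt : nat * nat) : R := digit_aux (fst jt) (snd jt).

(** x(sigma) = sum_{i >= 1} d_i omega^{i-1} *)
Definition xval (sigma : nat -> nat * nat) : R :=
  Series (fun i => digit (sigma i) * omega ^ i).

(** The code of x in [0,1): the (unique) sigma in V with x(sigma) = x. *)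
Definition code (x : R) : nat -> nat * nat :=
  epsilon (inhabits (fun _ : nat => (0%nat, 0%nat)))
          (fun sigma => inV sigma /\ xval sigma = x).

Definition gamma (x : R) : R := (x - digit (code x 0%nat)) / omega.

(* Main.v *)
Require Import Defs.
From Stdlib Require Import Reals ZArith Lra Lia Psatz ClassicalEpsilon Classical.
Open Scope R_scope.

Lemma lam_root : lam ^ 3 + lam ^ 2 + lam - 1 = 0.
Proof.
  unfold lam. apply epsilon_spec.
  destruct (IVT (fun x => x ^ 3 + x ^ 2 + x - 1) 0 1) as [z [_ Hz]].
  - reg.
  - lra.
  - simpl; lra.
  - simpl; lra.
  - exists z; exact Hz.
Qed.

Lemma lam_bounds : 0 < lam < 1.
Proof. pose proof lam_root. split; nra. Qed.

Lemma evalZl_mul u v : evalZl (Zl_mul u v) = evalZl u * evalZl v.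
Proof.
  destruct u as [[a0 a1] a2], v as [[b0 b1] b2]. unfold Zl_mul, evalZl.
  rewrite ?minus_IZR, ?plus_IZR, ?mult_IZR, ?minus_IZR, ?plus_IZR, ?mult_IZR.
  match goal with |- _ = ?R =>
    transitivity (R + (lam^3+lam^2+lam-1) * (- (IZR a1 * IZR b2 + IZR a2 * IZR b1)
       - IZR a2 * IZR b2 * (lam - 1))) end.
  - ring.
  - rewrite lam_root; ring.
Qed.

Definition Zl_add (u v : Zl) : Zl :=
  let '(a0, a1, a2) := u in let '(b0, b1, b2) := v in
  ((a0 + b0)%Z, (a1 + b1)%Z, (a2 + b2)%Z).
Definition Zl_scale (k : Z) (u : Zl) : Zl :=
  let '(a0, a1, a2) := u in ((k * a0)%Z, (k * a1)%Z, (k * a2)%Z).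

Lemma evalZl_add u v : evalZl (Zl_add u v) = evalZl u + evalZl v.
Proof. destruct u as [[a0 a1] a2], v as [[b0 b1] b2]; simpl; rewrite !plus_IZR; ring. Qed.
Lemma evalZl_sub u v : evalZl (Zl_sub u v) = evalZl u - evalZl v.
Proof. destruct u as [[a0 a1] a2], v as [[b0 b1] b2]; simpl; rewrite !minus_IZR; ring. Qed.
Lemma evalZl_scale k u : evalZl (Zl_scale k u) = IZR k * evalZl u.
Proof. destruct u as [[a0 a1] a2]; simpl; rewrite !mult_IZR; ring. Qed.
Lemma evalZl_const m : evalZl (m, 0%Z, 0%Z) = IZR m.
Proof. simpl; ring. Qed.

Lemma evalZl_omega : evalZl Zl_omega = omega.
Proof. unfold omega. pose proof lam_root. simpl. lra. Qed.

Lemma evalZl_pow n : evalZl (Zl_pow Zl_omega n) = omega ^ n.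
Proof.
  induction n.
  - simpl; ring.
  - change (Zl_pow Zl_omega (S n)) with (Zl_mul Zl_omega (Zl_pow Zl_omega n)).
    rewrite evalZl_mul, IHn, evalZl_omega. simpl pow. ring.
Qed.

Definition Nf (a b c : Z) : Z :=
  (c^3 + b*c^2 - b^2*c + b^3 + 3*a*c^2 - 4*a*b*c + a*b^2 - a^2*c - a^2*b + a^3)%Z.

Lemma normZl_Nf a b c : normZl (a, b, c) = Nf a b c.
Proof. unfold Nf; cbv beta iota zeta delta [normZl det3 Zl_mul Zl_one Zl_lam]. ring. Qed.

Definition adj (u : Zl) : Zl :=
  let '(a, b, c) := u in
  (((a - c) * (a - b) - (2 * c - b) * (b - c))%Z,
   (- (b * (a - b) - (2 * c - b) * c))%Z,
   (b * (b - c) - (a - c) * c)%Z).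

Lemma mul_adj u : Zl_mul u (adj u) = (normZl u, 0%Z, 0%Z).
Proof.
  destruct u as [[a b] c]. rewrite normZl_Nf. unfold Zl_mul, adj, Nf.
  f_equal; [f_equal|]; ring.
Qed.

Lemma Nf_mod3 a b c : (3 | Nf a b c)%Z -> (3 | a)%Z /\ (3 | b)%Z /\ (3 | c)%Z.
Proof.
  intros H.
  pose proof (Z.div_mod a 3 ltac:(lia)) as Ea.
  pose proof (Z.div_mod b 3 ltac:(lia)) as Eb.
  pose proof (Z.div_mod c 3 ltac:(lia)) as Ec.
  pose proof (Z.mod_pos_bound a 3 ltac:(lia)).
  pose proof (Z.mod_pos_bound b 3 ltac:(lia)).
  pose proof (Z.mod_pos_bound c 3 ltac:(lia)).
  set (qa := (a / 3)%Z) in *. set (qb := (b / 3)%Z) in *. set (qc := (c / 3)%Z) in *.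
  set (ra := (a mod 3)%Z) in *. set (rb := (b mod 3)%Z) in *. set (rc := (c mod 3)%Z) in *.
  clearbody qa qb qc ra rb rc. subst a b c.
  set (a := ra). set (b := rb). set (c := rc).
  assert (HK : Nf (3*qa+ra) (3*qb+rb) (3*qc+rc) = (3 * (
   (9)*qc^3 + (9)*qb*qc^2 + (-9)*qb^2*qc + (9)*qb^3 + (27)*qa*qc^2 + (-36)*qa*qb*qc + (9)*qa*qb^2 + (-9)*qa^2*qc + (-9)*qa^2*qb + (9)*qa^3 + (9)*c*qc^2 + (6)*c*qb*qc + (-3)*c*qb^2 + (18)*c*qa*qc + (-12)*c*qa*qb + (-3)*c*qa^2 + (3)*c^2*qc + (1)*c^2*qb + (3)*c^2*qa + (3)*b*qc^2 + (-6)*b*qb*qc + (9)*b*qb^2 + (-12)*b*qa*qc + (6)*b*qa*qb + (-3)*b*qa^2 + (2)*b*c*qc + (-2)*b*c*qb + (-4)*b*c*qa + (-1)*b^2*qc + (3)*b^2*qb + (1)*b^2*qa + (9)*a*qc^2 + (-12)*a*qb*qc + (3)*a*qb^2 + (-6)*a*qa*qc + (-6)*a*qa*qb + (9)*a*qa^2 + (6)*a*c*qc + (-4)*a*c*qb + (-2)*a*c*qa + (-4)*a*b*qc + (2)*a*b*qb + (-2)*a*b*qa + (-1)*a^2*qc + (-1)*a^2*qb + (3)*a^2*qa) + Nf ra rb rc)%Z).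
  { unfold Nf, a, b, c. ring. }
  rewrite HK in H. clear HK.
  apply (Z.divide_add_cancel_r _ _ _ (Z.divide_factor_l _ _)) in H.
  apply Z.mod_divide in H; [|lia].
  assert (Hr: forall r, (0 <= r < 3)%Z -> r = 0%Z \/ r = 1%Z \/ r = 2%Z) by lia.
  destruct (Hr ra) as [-> | [-> | ->]]; [lia|..];
  destruct (Hr rb) as [-> | [-> | ->]]; try lia;
  destruct (Hr rc) as [-> | [-> | ->]]; try lia;
  vm_compute in H; try discriminate;
  repeat split; apply Z.divide_add_r; try apply Z.divide_factor_l; apply Z.divide_0_r.
Qed.

Lemma Nf_zero_aux (k : nat) : forall a b c,
  (Z.abs a + Z.abs b + Z.abs c <= Z.of_nat k)%Z -> Nf a b c = 0%Z ->
  a = 0%Z /\ b = 0%Z /\ c = 0%Z.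
Proof.
  induction k; intros a b c Hk H0.
  - lia.
  - destruct (Nf_mod3 a b c) as [[a' Ha] [[b' Hb] [c' Hc]]].
    { rewrite H0. apply Z.divide_0_r. }
    subst a b c.
    assert (E : Nf (a' * 3) (b' * 3) (c' * 3) = (27 * Nf a' b' c')%Z) by (unfold Nf; ring).
    rewrite E in H0.
    destruct (IHk a' b' c') as [-> [-> ->]]; [|lia|lia].
    destruct (Z.eq_dec a' 0), (Z.eq_dec b' 0), (Z.eq_dec c' 0); lia.
Qed.

Lemma norm_zero u : normZl u = 0%Z -> u = (0%Z, 0%Z, 0%Z).
Proof.
  destruct u as [[a b] c]. rewrite normZl_Nf. intros H.
  destruct (Nf_zero_aux (Z.to_nat (Z.abs a + Z.abs b + Z.abs c)) a b c) as [-> [-> ->]];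
    auto; lia.
Qed.

Lemma indep u : evalZl u = 0 -> u = (0%Z, 0%Z, 0%Z).
Proof.
  intros H. apply norm_zero.
  pose proof (evalZl_mul u (adj u)) as E. rewrite mul_adj, evalZl_const, H in E.
  apply eq_IZR. lra.
Qed.

Lemma evalZl_inj u v : evalZl u = evalZl v -> u = v.
Proof.
  intros H. assert (E : Zl_sub u v = (0%Z,0%Z,0%Z)) by (apply indep; rewrite evalZl_sub; lra).
  destruct u as [[a0 a1] a2], v as [[b0 b1] b2]. simpl in E. injection E; intros.
  f_equal; [f_equal|]; lia.
Qed.

Definition phi (r : Z) (u : Zl) : Z := let '(a, b, c) := u in (a + r * b + r * r * c)%Z.

Lemma phi_sub r u v : phi r (Zl_sub u v) = (phi r u - phi r v)%Z.
Proof. destruct u as [[a0 a1] a2], v as [[b0 b1] b2]; simpl; ring. Qed.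

Lemma phi1_mul u v : exists k, phi 1 (Zl_mul u v) = (phi 1 u * phi 1 v + 2 * k)%Z.
Proof.
  destruct u as [[a0 a1] a2], v as [[b0 b1] b2].
  exists (- (a1 * b2 + a2 * b1))%Z. cbv beta iota zeta delta [phi Zl_mul]. ring.
Qed.

Lemma phi5_mul u v : exists k, phi 5 (Zl_mul u v) = (phi 5 u * phi 5 v + 7 * k)%Z.
Proof.
  destruct u as [[a0 a1] a2], v as [[b0 b1] b2].
  exists (- 22 * (a1 * b2 + a2 * b1 + 4 * a2 * b2))%Z. cbv beta iota zeta delta [phi Zl_mul]. ring.
Qed.

Lemma phi1_pow n : exists k, phi 1 (Zl_pow Zl_omega n) = (1 + 2 * k)%Z.
Proof.
  induction n as [|n [k IH]].
  - exists 0%Z. reflexivity.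
  - change (Zl_pow Zl_omega (S n)) with (Zl_mul Zl_omega (Zl_pow Zl_omega n)).
    destruct (phi1_mul Zl_omega (Zl_pow Zl_omega n)) as [k' E].
    rewrite E, IH. exists (k' - k - 1)%Z. change (phi 1 Zl_omega) with (-1)%Z. ring.
Qed.

Lemma phi5_pow n : exists k, phi 5 (Zl_pow Zl_omega n) =
  ((if Nat.even n then 1 else -1) + 7 * k)%Z.
Proof.
  induction n as [|n [k IH]].
  - exists 0%Z. reflexivity.
  - change (Zl_pow Zl_omega (S n)) with (Zl_mul Zl_omega (Zl_pow Zl_omega n)).
    destruct (phi5_mul Zl_omega (Zl_pow Zl_omega n)) as [k' E].
    rewrite E, IH, Nat.even_succ, <- Nat.negb_even.
    change (phi 5 Zl_omega) with (-29)%Z; destruct (Nat.even n); simpl negb; cbv iota.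
    + exists (k' - 29 * k - 4)%Z. ring.
    + exists (k' - 29 * k + 4)%Z. ring.
Qed.

Definition un (n : nat) : Zl := Zl_sub Zl_one (Zl_pow Zl_omega n).

Lemma evalZl_un n : evalZl (un n) = 1 - omega ^ n.
Proof. unfold un. rewrite evalZl_sub, evalZl_pow. simpl. ring. Qed.

Lemma in_ideal_Zl n m : in_ideal n m -> exists y, (m, 0%Z, 0%Z) = Zl_mul (un n) y.
Proof.
  intros [y Hy]. exists y. apply evalZl_inj.
  rewrite evalZl_const, evalZl_mul, evalZl_un. exact Hy.
Qed.

Lemma ideal_even n m : in_ideal n m -> (2 | m)%Z.
Proof.
  intros H. destruct (in_ideal_Zl n m H) as [y Hy].
  assert (E : phi 1 (m,0%Z,0%Z) = m) by (simpl; ring).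
  rewrite Hy in E. destruct (phi1_mul (un n) y) as [k Ek].
  assert (Eu : phi 1 (un n) = (phi 1 Zl_one - phi 1 (Zl_pow Zl_omega n))%Z) by apply phi_sub.
  destruct (phi1_pow n) as [j Ej]. change (phi 1 Zl_one) with 1%Z in Eu.
  rewrite Ej in Eu.
  rewrite Eu in Ek. exists (k - j * phi 1 y)%Z. lia.
Qed.

Lemma ideal_7 n m : Nat.even n = true -> in_ideal n m -> (7 | m)%Z.
Proof.
  intros Hn H. destruct (in_ideal_Zl n m H) as [y Hy].
  assert (E : phi 5 (m,0%Z,0%Z) = m) by (simpl; ring).
  rewrite Hy in E. destruct (phi5_mul (un n) y) as [k Ek].
  assert (Eu : phi 5 (un n) = (phi 5 Zl_one - phi 5 (Zl_pow Zl_omega n))%Z) by apply phi_sub.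
  destruct (phi5_pow n) as [j Ej]. change (phi 5 Zl_one) with 1%Z in Eu.
  rewrite Ej, Hn in Eu.
  rewrite Eu in Ek. exists (k - j * phi 5 y)%Z. lia.
Qed.

Lemma omega_pos : 0 < omega < 1.
Proof. unfold omega. pose proof lam_bounds. assert (0 < lam * lam < 1) by (split; nra). simpl. split; nra. Qed.

Lemma omega_pow_lt n : 0 < omega ^ S n < 1.
Proof.
  pose proof omega_pos. induction n.
  - simpl; lra.
  - change (omega ^ S (S n)) with (omega * omega ^ S n). split; nra.
Qed.

Lemma min_exists (P : Z -> Prop) (k : nat) :
  (exists m, (0 < m)%Z /\ (m <= Z.of_nat k)%Z /\ P m) ->
  exists M, (0 < M)%Z /\ P M /\ forall m, (0 < m)%Z -> P m -> (M <= m)%Z.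
Proof.
  induction k as [|k IH]; intros [m [H1 [H2 H3]]].
  - lia.
  - destruct (classic (exists m, (0 < m)%Z /\ (m <= Z.of_nat k)%Z /\ P m)) as [Hx|Hx].
    + apply IH, Hx.
    + exists m. split; [lia|]. split; [exact H3|].
      intros m' Hm' HP. destruct (Z_le_gt_dec m m'); [lia|].
      exfalso. apply Hx. exists m'. split; [lia|split; [lia|exact HP]].
Qed.

Lemma ideal_comb n a b q : in_ideal n a -> in_ideal n b -> in_ideal n (a - q * b).
Proof.
  intros [ya Ha] [yb Hb]. exists (Zl_sub ya (Zl_scale q yb)).
  rewrite evalZl_sub, evalZl_scale, minus_IZR, mult_IZR, Ha, Hb. ring.
Qed.

Lemma ideal_norm n : in_ideal n (normZl (un n)).
Proof.
  exists (adj (un n)). rewrite <- evalZl_un, <- evalZl_mul, mul_adj, evalZl_const. reflexivity.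
Qed.

Lemma norm_nonzero n : (1 <= n)%nat -> normZl (un n) <> 0%Z.
Proof.
  intros Hn H. apply norm_zero in H.
  pose proof (evalZl_un n) as E. rewrite H in E. simpl in E.
  destruct n; [lia|]. pose proof (omega_pow_lt n). lra.
Qed.

Lemma Mn_exists n : (1 <= n)%nat -> exists M, is_Mn n M.
Proof.
  intros Hn. set (N := normZl (un n)).
  destruct (min_exists (in_ideal n) (Z.to_nat (Z.abs N))) as [M [H1 [H2 H3]]].
  - exists (Z.abs N). pose proof (norm_nonzero n Hn). fold N in H.
    split; [lia|]. split; [lia|].
    destruct (Z.abs_eq_or_opp N) as [-> | ->].
    + apply ideal_norm.
    + replace (- N)%Z with (0 - 1 * N)%Z by ring.
      apply ideal_comb; [exists (0%Z,0%Z,0%Z); simpl; ring | apply ideal_norm].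
  - exists M. repeat split; auto.
Qed.

Lemma Mn_divides n M m : is_Mn n M -> in_ideal n m -> (M | m)%Z.
Proof.
  intros [H1 [H2 H3]] Hm.
  pose proof (Z.div_mod m M ltac:(lia)) as E.
  pose proof (Z.mod_pos_bound m M H1) as B.
  assert (Hr : in_ideal n (m - (m / M) * M)) by (apply ideal_comb; auto).
  replace (m - m / M * M)%Z with (m mod M)%Z in Hr by lia.
  destruct (Z.eq_dec (m mod M) 0) as [E0|E0].
  - exists (m / M)%Z. lia.
  - specialize (H3 (m mod M)%Z ltac:(lia) Hr). lia.
Qed.

Lemma digit_aux_in j t : exists e, digit_aux j t = evalZl e.
Proof.
  induction t as [|t [e IH]].
  - exists (0%Z,0%Z,0%Z). simpl. ring.
  - exists (Zl_add e (tau (p j t))). simpl. rewrite IH, evalZl_add. reflexivity.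
Qed.

Lemma iter_gamma x k : exists z, Nat.iter k gamma x * omega ^ k = x - evalZl z.
Proof.
  pose proof omega_pos.
  induction k as [|k [z IH]].
  - exists (0%Z,0%Z,0%Z). simpl. ring.
  - set (I := Nat.iter k gamma x) in *.
    change (Nat.iter (S k) gamma x) with (gamma I).
    unfold gamma, digit. destruct (digit_aux_in (fst (code I 0%nat)) (snd (code I 0%nat))) as [e He].
    rewrite He.
    exists (Zl_add z (Zl_mul e (Zl_pow Zl_omega k))).
    rewrite evalZl_add, evalZl_mul, evalZl_pow.
    change (omega ^ S k) with (omega * omega ^ k).
    replace ((I - evalZl e) / omega * (omega * omega ^ k)) with ((I - evalZl e) * omega ^ k)
      by (field; lra).
    rewrite Rmult_minus_distr_r, IH. ring.
Qed.

Theorem mainTheorem7 (n : nat) (hn : (1 <= n)%nat) :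
  exists M : Z,
    is_Mn n M /\
    Z.Even M /\
    (Nat.Even n -> (14 | M)%Z) /\
    (M | normZl (Zl_sub Zl_one (Zl_pow Zl_omega n)))%Z /\
    (forall x : R, 0 <= x < 1 -> Nat.iter n gamma x = x ->
       exists y : Zl, x = evalZl y / IZR M).
Proof.
  destruct (Mn_exists n hn) as [M HM].
  pose proof HM as [H1 [H2 H3]].
  exists M. split; [exact HM|].
  split.
  { destruct (ideal_even n M H2) as [k Hk]. exists k. lia. }
  split.
  { intros He. apply Nat.even_spec in He.
    destruct (ideal_even n M H2) as [a Ha]. destruct (ideal_7 n M He H2) as [b Hb].
    exists (a - 3 * b)%Z. lia. }
  split.
  { apply (Mn_divides n M _ HM). apply ideal_norm. }
  intros x _ Hx.
  destruct (iter_gamma x n) as [z Hz]. rewrite Hx in Hz.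
  destruct H2 as [y Hy].
  exists (Zl_mul z y). rewrite evalZl_mul.
  assert (HM0 : 0 < IZR M) by (apply IZR_lt; lia).
  rewrite Hy.
  destruct n as [|n']; [lia|]. pose proof (omega_pow_lt n').
  replace (evalZl z) with (x * (1 - omega ^ S n')) by lra.
  field. split; [|lra].
  intro Hy0. rewrite Hy0 in Hy. rewrite Rmult_0_r in Hy. lra.
Qed.
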